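(* Let $G$ be the toroidal $L$-grid, let $r$ be a positive integer with $r\le L-2$, and let $\mathscr{S}$ be the block system consisting of all $r\times r$ subgrids of $G$. Then $\mu^+(\mathscr{S})\le 2+\frac2r$.
   Context: The toroidal $L$-grid has vertex set $(\mathbb{Z}/L\mathbb{Z})^2$, with $(a,b)\sim(c,d)$ iff ($a-c=\pm1$ and $b=d$) or ($b-d=\pm1$ and $a=c$) in $\mathbb{Z}/L\mathbb{Z}$. An $r\times r$ subgrid is a set $\{(a+i,b+j):0\le i,j\le r-1\}$. Potts configurations: $\sigma\in\Omega=[q]^V$, $q$ a positive integer. For $S\subseteq V$, $\partial S$ is the set of vertices outside $S$ with a neighbour in $S$. For $X\in\Omega$, $c\in[q]^S$: $X^{(S,c)}$ equals $c$ on $S$ and $X$ off $S$; $\mu_{X,S}(c)$ is the number of monochromatic edges of $X^{(S,c)}$ incident with at least one vertex of $S$. A colour used by $c$ is free with respect to $X,S$ if it does not occur among $\{X(u):u\in\partial S\}$; $f(X,S,c)$ is the number of free colours used by $c$. $\mu^+_{X,S,f}=\max\{\mu_{X,S}(c)/(|S|-f): c\in[q]^S,\ f(X,S,c)=f\}$ (empty maximum $=0$), and $\mu^+(\mathscr{S})=\max_{S\in\mathscr{S}}\max_{X\in\Omega}\max_{f\in\{0,\dots,|S|-1\}}\mu^+_{X,S,f}$. *)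

(* Defs.v *)
From HB Require Import structures.
From mathcomp Require Import all_boot all_order all_algebra.
Set Implicit Arguments. Unset Strict Implicit. Unset Printing Implicit Defensive.
Import Order.TTheory GRing.Theory Num.Theory.

(* Vertices of the toroidal L-grid: (Z/LZ)^2, represented by 'I_L * 'I_L. *)
Definition V (L : nat) : finType := ('I_L * 'I_L)%type.

Definition pm1 (L : nat) (a c : 'I_L) : bool :=
  (val a == (val c + 1) %% L) || (val c == (val a + 1) %% L).

Definition adj (L : nat) (u v : V L) : bool :=
  (pm1 u.1 v.1 && (u.2 == v.2)) || (pm1 u.2 v.2 && (u.1 == v.1)).

Definition edges (L : nat) : {set {set V L}} :=
  [set e : {set V L} | [exists u : V L, exists v : V L, adj u v && (e == [set u; v])]].

Definition subgrid (L r : nat) (a b : 'I_L) : {set V L} :=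
  [set v : V L | [exists i : 'I_r, exists j : 'I_r,
     (val v.1 == (val a + val i) %% L) && (val v.2 == (val b + val j) %% L)]].

Definition subgrids (L r : nat) : {set {set V L}} :=
  [set subgrid r a b | a : 'I_L, b : 'I_L].

Definition boundary (L : nat) (S : {set V L}) : {set V L} :=
  [set u : V L | (u \notin S) && [exists v in S, adj u v]].

Definition patch (L q : nat) (X c : {ffun V L -> 'I_q}) (S : {set V L})
  : {ffun V L -> 'I_q} :=
  [ffun v => if v \in S then c v else X v].

Definition mu (L q : nat) (X : {ffun V L -> 'I_q}) (S : {set V L})
  (c : {ffun V L -> 'I_q}) : nat :=
  let Y := patch X c S in
  #|[set e in edges L | (e :&: S != set0) &&
        [forall u in e, forall v in e, Y u == Y v]]|.

Definition fcount (L q : nat) (X : {ffun V L -> 'I_q}) (S : {set V L})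
  (c : {ffun V L -> 'I_q}) : nat :=
  #|[set k : 'I_q | [exists v in S, c v == k] &&
                    [forall u in boundary S, X u != k]]|.

Local Open Scope ring_scope.

(* mu^+_{X,S,f}; empty maximum = 0 *)
Definition mu_plus_XSf (L q : nat) (X : {ffun V L -> 'I_q}) (S : {set V L})
  (f : nat) : rat :=
  \big[Num.max/0]_(c : {ffun V L -> 'I_q} | fcount X S c == f)
     ((mu X S c)%:R / (#|S| - f)%:R).

Definition mu_plus (L q : nat) (SS : {set {set V L}}) : rat :=
  \big[Num.max/0]_(S in SS) \big[Num.max/0]_(X : {ffun V L -> 'I_q})
     \big[Num.max/0]_(f < #|S|) mu_plus_XSf X S f.

(* Main.v *)
Require Import Defs.
From HB Require Import structures.
From mathcomp Require Import all_boot all_order all_algebra.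
From mathcomp Require Import zify ring lra.
Set Implicit Arguments. Unset Strict Implicit. Unset Printing Implicit Defensive.

Lemma card_big_setU' (I : Type) (T : finType) (r : seq I) (P : {pred I})
    (F : I -> {set T}) :
  (#|\bigcup_(i <- r | P i)  F i| <= \sum_(i <- r | P i) #|F i|)%N.
Proof.
elim/big_ind2 : _ => // [|m A n B Am Bn]; first by rewrite cards0.
by rewrite (leq_trans (leq_card_setU _ _))// leq_add.
Qed.

Definition Dm (q : nat) (col : nat -> 'I_q) (Fr : pred 'I_q) m :=
  [set k | Fr k && has (fun p => col p == k) (iota 0 m.+1)].
Definition ch (q : nat) (col : nat -> 'I_q) m := \sum_(p < m) (col p != col p.+1).

Lemma Dm_sub q col Fr m : @Dm q col Fr m \subset Dm col Fr m.+1.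
Proof.
apply/subsetP => k; rewrite !inE => /andP[Hf /hasP[p Hp Hk]].
apply/andP; split => //; apply/hasP; exists p => //; move: Hp; rewrite !mem_iota; lia.
Qed.

Lemma Dm_step q col Fr m : @Dm q col Fr m.+1 \subset col m.+1 |: Dm col Fr m.
Proof.
apply/subsetP => k; rewrite !inE => /andP[Hf /hasP[p Hp Hk]].
have [e|ne] := eqVneq p m.+1.
  by rewrite -e (eqP Hk) eqxx.
apply/orP; right; apply/andP; split => //; apply/hasP; exists p => //; move: Hp ne; rewrite !mem_iota.
move=> H1 H2; apply/andP; split => //; move/eqP: H2; lia.
Qed.

Lemma Dm_same q col (Fr : pred _) m : (Fr (col m.+1) -> col m.+1 \in @Dm q col Fr m) ->
  Dm col Fr m.+1 = Dm col Fr m.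
Proof.
move=> H; apply/eqP; rewrite eqEsubset Dm_sub andbT.
apply/subsetP => k Hk; move: (subsetP (Dm_step col Fr m) k Hk).
rewrite in_setU1 => /orP[/eqP e|//]; rewrite e; apply: H.
by move: Hk; rewrite inE e => /andP[].
Qed.

Lemma inv q col (Fr : pred _) m : ~~ Fr (col 0) ->
  #|@Dm q col Fr m| + (~~ Fr (col m) && (Dm col Fr m != set0)) <= ch col m.
Proof.
move=> H0; elim: m => [|m IH].
  have -> : Dm col Fr 0 = set0.
    apply/setP => k; rewrite !inE /= orbF; apply/negP => /andP[Hf /eqP e].
    by move: H0; rewrite e Hf.
  by rewrite cards0 eqxx andbF /ch big_ord0.
rewrite /ch big_ord_recr /= -/(ch col m).
have [e|ne] := eqVneq (col m) (col m.+1).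
  rewrite Dm_same; last first.
    move=> Hf; rewrite inE -e; rewrite -e in Hf; apply/andP; split => //; apply/hasP; exists m => //.
    by rewrite mem_iota; lia.
  by rewrite -e addn0.
rewrite addn1.
case Hf: (Fr (col m.+1)) => /=.
  rewrite addn0.
  apply: (leq_trans (subset_leq_card (Dm_step col Fr m))).
  rewrite cardsU1; move: IH; case: (_ \notin _); lia.
rewrite Dm_same; last by rewrite Hf.
have H1 : #|Dm col Fr m| <= ch col m by apply: leq_trans IH; apply: leq_addr.
clear IH; move: H1; case: (_ != _) => /=; lia.
Qed.

Lemma line_gen q col (Fr : pred 'I_q) r : ~~ Fr (col 0) -> ~~ Fr (col r.+1) ->
  r * (\sum_(p < r.+1) (col p == col p.+1)) <= r.+1 * (r - #|@Dm q col Fr r.+1|)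
  /\ #|Dm col Fr r.+1| <= r.
Proof.
move=> H0 H1.
have Hd : #|Dm col Fr r.+1| <= r.
  apply: (@leq_trans #|[set col (val j).+1 | j : 'I_r]|); last first.
    by apply: leq_trans (leq_imset_card _ _) _; rewrite card_ord.
  apply: subset_leq_card; apply/subsetP => k; rewrite inE => /andP[Hf /hasP[p Hp /eqP Hk]].
  move: Hp; rewrite mem_iota => /andP[_ Hp].
  have p0 : p != 0 by apply/eqP => e; move: H0; rewrite -e Hk Hf.
  have pr : p != r.+1 by apply/eqP => e; move: H1; rewrite -e Hk Hf.
  have Hj : p.-1 < r by move/eqP: p0; move/eqP: pr; lia.
  apply/imsetP; exists (Ordinal Hj) => //=.
  by rewrite prednK ?Hk // lt0n.
have Hi := @inv q col Fr r.+1 H0.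
rewrite (negbTE H1) /= in Hi.
have Hs : \sum_(p < r.+1) (col p == col p.+1) + ch col r.+1 = r.+1.
  rewrite /ch -big_split /=.
  rewrite (eq_bigr (fun _ => 1)); last by move=> i _; case: (_ == _).
  by rewrite sum1_card card_ord.
split => //.
have [D0|Dn] := eqVneq (Dm col Fr r.+1) set0.
  rewrite D0 cards0 subn0 mulnC; apply: leq_mul => //.
  by move: Hs; set M := \sum_(p < r.+1) _; lia.
rewrite Dn /= in Hi.
move: Hi Hs Hd; set M := \sum_(p < r.+1) _; set d := #|_|; set c := ch _ _.
move=> Hi Hs Hd.
have H : M <= r - d by lia.
apply: leq_trans (leq_mul (leqnSn r) H). by apply: leq_mul.
Qed.

Definition md (L' t : nat) : 'I_L'.+1 := Ordinal (ltn_pmod t (ltn0Sn L')).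

Lemma md_eq L' s t : (md L' s == md L' t) = (s == t %[mod L'.+1]).
Proof. by []. Qed.

Lemma mdS L' t : md L' (t.+1 + L') = md L' t.
Proof. apply/eqP; rewrite md_eq addSnnS; apply/eqP; exact: modnDr. Qed.

Lemma md_val L' (x : 'I_L'.+1) : md L' x = x.
Proof. by apply/val_inj; rewrite /= modn_small. Qed.

Lemma md_mod L' t : md L' (t %% L'.+1) = md L' t.
Proof. by apply/val_inj; rewrite /= modn_mod. Qed.

Lemma in_sub L' r (a b : 'I_L'.+1) (v : V L'.+1) :
  (v \in subgrid r a b) = [exists i : 'I_r, exists j : 'I_r, v == (md L' (a + i), md L' (b + j))].
Proof.
rewrite inE; apply/existsP/existsP => [[i /existsP[j /andP[e1 e2]]]|[i /existsP[j /eqP ->]]].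
  exists i; apply/existsP; exists j; case: v e1 e2 => v1 v2 /= e1 e2.
  by apply/eqP; congr pair; apply/val_inj; [exact: (eqP e1) | exact: (eqP e2)].
by exists i; apply/existsP; exists j; rewrite /= !eqxx.
Qed.

Lemma sub_ij L' r (a b : 'I_L'.+1) i j : i < r -> j < r ->
  (md L' (a + i), md L' (b + j)) \in subgrid r a b.
Proof.
move=> Hi Hj; rewrite in_sub; apply/existsP; exists (Ordinal Hi); apply/existsP; exists (Ordinal Hj).
by [].
Qed.

Lemma notin2 L' r (a b : 'I_L'.+1) x t : r.+2 <= L'.+1 -> r <= t <= L' ->
  (x, md L' (b + t)) \notin subgrid r a b.
Proof.
move=> HL Ht; rewrite in_sub; apply/existsP => [[i /existsP[j /eqP [_ e]]]].
move/eqP: e; rewrite eqn_modDl !modn_small; first last.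
- lia.
- by have := ltn_ord j; lia.
by move/eqP => e; move: (ltn_ord j) Ht; rewrite -e; lia.
Qed.

Lemma notin1 L' r (a b : 'I_L'.+1) y t : r.+2 <= L'.+1 -> r <= t <= L' ->
  (md L' (a + t), y) \notin subgrid r a b.
Proof.
move=> HL Ht; rewrite in_sub; apply/existsP => [[i /existsP[j /eqP [e _]]]].
move/eqP: e; rewrite eqn_modDl !modn_small; first last.
- lia.
- by have := ltn_ord i; lia.
by move/eqP => e; move: (ltn_ord i) Ht; rewrite -e; lia.
Qed.

Definition hv L' (a b : 'I_L'.+1) (i p : nat) : V L'.+1 := (md L' (a + i), md L' (b + p + L')).
Definition vv L' (a b : 'I_L'.+1) (j p : nat) : V L'.+1 := (md L' (a + p + L'), md L' (b + j)).

Lemma hvS L' a b i j : @hv L' a b i j.+1 = (md L' (a + i), md L' (b + j)).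
Proof. by rewrite /hv addnS mdS. Qed.
Lemma vvS L' a b i j : @vv L' a b j i.+1 = (md L' (a + i), md L' (b + j)).
Proof. by rewrite /vv addnS mdS. Qed.

Lemma pm1_step L' t : pm1 (md L' t) (md L' t.+1).
Proof. by apply/orP; right; rewrite /= modnDml addn1. Qed.

Lemma pm1_sym L (x y : 'I_L) : pm1 x y = pm1 y x.
Proof. by rewrite /pm1 orbC. Qed.

Lemma adj_sym L (u v : V L) : adj u v = adj v u.
Proof. by rewrite /adj pm1_sym [pm1 u.2 _]pm1_sym (eq_sym u.1) (eq_sym u.2). Qed.

Lemma hv_bd L' r a b i : r.+2 <= L'.+1 -> 0 < r -> i < r ->
  [/\ forall j, j < r -> @hv L' a b i j.+1 \in subgrid r a b,
      hv a b i 0 \in boundary (subgrid r a b) &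
      hv a b i r.+1 \in boundary (subgrid r a b)].
Proof.
move=> HL Hr Hi; split.
- by move=> j Hj; rewrite hvS sub_ij.
- rewrite inE /hv addn0; apply/andP; split; first by apply: notin2 => //; lia.
  apply/existsP; exists (md L' (a + i), md L' (b + 0)); rewrite sub_ij //=.
  have E : md L' (b + 0) = md L' (b + L').+1 by apply/val_inj; rewrite /= -addnS modnDr addn0.
  by rewrite E /adj /= pm1_step eqxx ?orbT.
- rewrite inE hvS; apply/andP; split; first by apply: notin2 => //; lia.
  apply/existsP; exists (md L' (a + i), md L' (b + r.-1)); rewrite sub_ij //; last by lia.
  have -> : b + r = (b + r.-1).+1 by lia.
  by rewrite /adj /= (pm1_sym (md _ (b + r.-1).+1)) pm1_step eqxx ?orbT.
Qed.

Lemma vv_bd L' r a b j : r.+2 <= L'.+1 -> 0 < r -> j < r ->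
  [/\ forall i, i < r -> @vv L' a b j i.+1 \in subgrid r a b,
      vv a b j 0 \in boundary (subgrid r a b) &
      vv a b j r.+1 \in boundary (subgrid r a b)].
Proof.
move=> HL Hr Hj; split.
- by move=> i Hi; rewrite vvS sub_ij.
- rewrite inE /vv addn0; apply/andP; split; first by apply: notin1 => //; lia.
  apply/existsP; exists (md L' (a + 0), md L' (b + j)); rewrite sub_ij //=.
  have E : md L' (a + 0) = md L' (a + L').+1 by apply/val_inj; rewrite /= -addnS modnDr addn0.
  by rewrite E /adj /= pm1_step eqxx ?orbT.
- rewrite inE vvS; apply/andP; split; first by apply: notin1 => //; lia.
  apply/existsP; exists (md L' (a + r.-1), md L' (b + j)); rewrite sub_ij //; last by lia.
  have -> : a + r = (a + r.-1).+1 by lia.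
  by rewrite /adj /= (pm1_sym (md _ (a + r.-1).+1)) pm1_step eqxx ?orbT.
Qed.

Definition Frr L q (S : {set V L}) (X : {ffun V L -> 'I_q}) : pred 'I_q :=
  fun k => [forall u in boundary S, X u != k].

Lemma line_bound L q r (S : {set V L}) (X c : {ffun V L -> 'I_q}) (ln : nat -> V L) :
  (forall j, j < r -> ln j.+1 \in S) -> ln 0 \in boundary S -> ln r.+1 \in boundary S ->
  r * (\sum_(p < r.+1) (patch X c S (ln p) == patch X c S (ln p.+1)))
    <= r.+1 * (r - #|Dm (fun p => patch X c S (ln p)) (Frr S X) r.+1|)
  /\ #|Dm (fun p => patch X c S (ln p)) (Frr S X) r.+1| <= r.
Proof.
move=> H1 H0 Hr; apply: line_gen.
- have : ln 0 \notin S by move: H0; rewrite inE => /andP[].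
  rewrite /patch ffunE => /negbTE ->; apply/negP => /forallP /(_ (ln 0)).
  by rewrite H0 eqxx.
- have : ln r.+1 \notin S by move: Hr; rewrite inE => /andP[].
  rewrite /patch ffunE => /negbTE ->; apply/negP => /forallP /(_ (ln r.+1)).
  by rewrite Hr eqxx.
Qed.

Lemma fam_bound L q r (S : {set V L}) (X c : {ffun V L -> 'I_q}) (ln : nat -> nat -> V L) :
  (forall i, i < r -> [/\ forall j, j < r -> ln i j.+1 \in S, ln i 0 \in boundary S
       & ln i r.+1 \in boundary S]) ->
  (forall k, [exists v in S, c v == k] && Frr S X k ->
     exists2 i : 'I_r, true & k \in Dm (fun p => patch X c S (ln i p)) (Frr S X) r.+1) ->
  r * (\sum_(i < r) \sum_(p < r.+1) (patch X c S (ln i p) == patch X c S (ln i p.+1)))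
    <= r.+1 * (r * r - fcount X S c).
Proof.
move=> Hl Hc.
pose d (i : 'I_r) := #|Dm (fun p => patch X c S (ln i p)) (Frr S X) r.+1|.
have Hb : forall i : 'I_r, r * (\sum_(p < r.+1) (patch X c S (ln i p) == patch X c S (ln i p.+1)))
    <= r.+1 * (r - d i) /\ d i <= r.
  by move=> i; have [? ? ?] := Hl i (ltn_ord i); apply: line_bound.
rewrite big_distrr /=.
apply: (@leq_trans (\sum_(i < r) r.+1 * (r - d i))).
  by apply: leq_sum => i _; case: (Hb i).
rewrite -big_distrr /= leq_mul2l; apply/orP; right.
rewrite sumnB; last by move=> i _; case: (Hb i).
rewrite sum_nat_const card_ord leq_sub2l //.
apply: leq_trans (card_big_setU' _ _ (fun i : 'I_r => Dm (fun p => patch X c S (ln i p)) (Frr S X) r.+1)).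
apply: subset_leq_card; apply/subsetP => k; rewrite inE => Hk.
have [i _ Hi] := Hc k Hk.
by apply/bigcupP; exists i.
Qed.

Lemma set2C (T : finType) (u v : T) : [set u; v] = [set v; u].
Proof. by rewrite setUC. Qed.

Lemma card_pairs m n (P : nat -> nat -> bool) :
  #|[set x : 'I_m * 'I_n | P x.1 x.2]| = \sum_(i < m) \sum_(p < n) P i p.
Proof.
rewrite -sum1dep_card big_mkcond pair_big /=.
by apply: eq_bigr => x _; case: (P _ _).
Qed.

Definition PS L' q r (Y : {ffun V L'.+1 -> 'I_q}) (ln : nat -> nat -> V L'.+1) :=
  [set x : 'I_r * 'I_r.+1 | Y (ln x.1 x.2) == Y (ln x.1 x.2.+1)].
Definition gl L' r (ln : nat -> nat -> V L'.+1) (x : 'I_r * 'I_r.+1) : {set V L'.+1} :=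
  [set ln x.1 x.2; ln x.1 x.2.+1].

Lemma card_PS L' q r (Y : {ffun V L'.+1 -> 'I_q}) (ln : nat -> nat -> V L'.+1) :
  #|PS r Y ln| = \sum_(i < r) \sum_(p < r.+1) (Y (ln i p) == Y (ln i p.+1)).
Proof. rewrite /PS; exact: (@card_pairs r r.+1 (fun i p => Y (ln i p) == Y (ln i p.+1))). Qed.

Lemma edge_cov L' q r (a b : 'I_L'.+1) (Y : {ffun V L'.+1 -> 'I_q}) (u v : V L'.+1) :
  u \in subgrid r a b -> adj u v -> Y u == Y v ->
  [set u; v] \in (gl (vv a b) @: PS r Y (vv a b)) :|: (gl (hv a b) @: PS r Y (hv a b)).
Proof.
rewrite in_sub => /existsP[i /existsP[j /eqP ->]].
case: v => v1 v2 /orP[/andP[Hp /eqP /= e2]|/andP[Hp /eqP /= e1]] Hm; subst.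
- apply/setUP; left; apply/imsetP.
  move: Hp => /= /orP[/eqP e|/eqP e].
  + have Ev : v1 = md L' (a + i + L').
      apply/val_inj; rewrite /=.
      have -> : (a + i + L') %% L'.+1 = ((a + i) %% L'.+1 + L') %% L'.+1 by rewrite modnDml.
      have e' : (a + i) %% L'.+1 = (v1 + 1) %% L'.+1 := e.
      by rewrite e' modnDml -addnA add1n modnDr modn_small.
    have Hi : i < r.+1 := ltnW (ltn_ord i).
    exists (j, Ordinal Hi); rewrite ?inE /gl /= vvS /vv -Ev; first by rewrite eq_sym. by rewrite set2C.
  + have Ev : v1 = md L' (a + i).+1.
      by apply/val_inj; rewrite /= e modnDml addn1.
    have Hi : i.+1 < r.+1 := ltn_ord i.
    exists (j, Ordinal Hi); rewrite ?inE /gl /= !vvS addnS -Ev //.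
- apply/setUP; right; apply/imsetP.
  move: Hp => /= /orP[/eqP e|/eqP e].
  + have Ev : v2 = md L' (b + j + L').
      apply/val_inj; rewrite /=.
      have -> : (b + j + L') %% L'.+1 = ((b + j) %% L'.+1 + L') %% L'.+1 by rewrite modnDml.
      have e' : (b + j) %% L'.+1 = (v2 + 1) %% L'.+1 := e.
      by rewrite e' modnDml -addnA add1n modnDr modn_small.
    have Hj : j < r.+1 := ltnW (ltn_ord j).
    exists (i, Ordinal Hj); rewrite ?inE /gl /= hvS /hv -Ev; first by rewrite eq_sym. by rewrite set2C.
  + have Ev : v2 = md L' (b + j).+1.
      by apply/val_inj; rewrite /= e modnDml addn1.
    have Hj : j.+1 < r.+1 := ltn_ord j.
    exists (i, Ordinal Hj); rewrite ?inE /gl /= !hvS addnS -Ev //.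
Qed.

Lemma card_subgrid L' r (a b : 'I_L'.+1) : r <= L'.+1 -> #|subgrid r a b| = r * r.
Proof.
move=> Hr.
have -> : subgrid r a b = [set (md L' (a + x.1), md L' (b + x.2)) | x : 'I_r * 'I_r].
  apply/setP => v; rewrite in_sub; apply/existsP/imsetP.
    by move=> [i /existsP[j /eqP ->]]; exists (i, j).
  by move=> [[i j] _ ->]; exists i; apply/existsP; exists j.
rewrite card_imset ?card_prod ?card_ord //.
move=> [i j] [i' j'] [e1 e2]; move/eqP: e1; move/eqP: e2.
rewrite !eqn_modDl !modn_small; try by (apply: leq_trans Hr; apply: ltn_ord).
by move/eqP => e2 /eqP e1; congr pair; apply: val_inj.
Qed.

Lemma mu_cov L' q r (a b : 'I_L'.+1) (X c : {ffun V L'.+1 -> 'I_q}) :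
  mu X (subgrid r a b) c <= #|PS r (patch X c (subgrid r a b)) (vv a b)|
                           + #|PS r (patch X c (subgrid r a b)) (hv a b)|.
Proof.
rewrite /mu; set S := subgrid r a b; set Y := patch X c S.
apply: (@leq_trans #|(gl (vv a b) @: PS r Y (vv a b)) :|: (gl (hv a b) @: PS r Y (hv a b))|).
  2: apply: leq_trans (leq_card_setU _ _) _; by apply: leq_add; apply: leq_imset_card.
apply: subset_leq_card; apply/subsetP => e; rewrite inE => /andP[He /andP[Hs Hm]].
move: He; rewrite inE => /existsP[u /existsP[v /andP[Huv /eqP Ee]]]; subst e.
have Hy : Y u == Y v.
  move/forallP: Hm => /(_ u); rewrite set21 /= => /forallP /(_ v); by rewrite set22.
move/set0Pn: Hs => [w]; rewrite inE => /andP[Hw HwS].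
move: Hw; rewrite in_set2 => /orP[/eqP Ew|/eqP Ew]; subst w.
  exact: edge_cov.
rewrite set2C; apply: edge_cov => //; first by rewrite adj_sym.
by rewrite eq_sym.
Qed.

Lemma mu_bound L' q r (a b : 'I_L'.+1) (X c : {ffun V L'.+1 -> 'I_q}) :
  r.+2 <= L'.+1 -> 0 < r ->
  r * mu X (subgrid r a b) c <= (2 * r.+1) * (r * r - fcount X (subgrid r a b) c).
Proof.
move=> HL Hr.
have Hm := @mu_cov L' q r a b X c.
rewrite !card_PS in Hm.
set S := subgrid r a b in Hm *.
have HV : r * (\sum_(i < r) \sum_(p < r.+1)
      (patch X c S (vv a b i p) == patch X c S (vv a b i p.+1))) <= r.+1 * (r * r - fcount X S c).
  apply: fam_bound; first by move=> i Hi; apply: vv_bd.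
  move=> k /andP[/existsP[v /andP[Hv /eqP Hk]] Hf].
  move: Hv; rewrite in_sub => /existsP[i /existsP[j /eqP Ev]].
  exists j => //; rewrite inE; apply/andP; split => //; apply/hasP; exists i.+1.
    by rewrite mem_iota /=; have := ltn_ord i; lia.
  by rewrite vvS -Ev /patch ffunE /S in_sub Ev; apply/eqP; rewrite -Hk Ev /=; apply/ifT; apply/existsP; exists i; apply/existsP; exists j.
have HH : r * (\sum_(i < r) \sum_(p < r.+1)
      (patch X c S (hv a b i p) == patch X c S (hv a b i p.+1))) <= r.+1 * (r * r - fcount X S c).
  apply: fam_bound; first by move=> i Hi; apply: hv_bd.
  move=> k /andP[/existsP[v /andP[Hv /eqP Hk]] Hf].
  move: Hv; rewrite in_sub => /existsP[i /existsP[j /eqP Ev]].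
  exists i => //; rewrite inE; apply/andP; split => //; apply/hasP; exists j.+1.
    by rewrite mem_iota /=; have := ltn_ord j; lia.
  by rewrite hvS -Ev /patch ffunE /S in_sub Ev; apply/eqP; rewrite -Hk Ev /=; apply/ifT; apply/existsP; exists i; apply/existsP; exists j.
apply: leq_trans (leq_mul (leqnn r) Hm) _.
rewrite mulnDr mul2n -addnn mulnDl; exact: leq_add HV HH.
Qed.

Unset Implicit Arguments.
Import Order.TTheory GRing.Theory Num.Theory.
Local Open Scope ring_scope.

Theorem lemma2p9 (L q r : nat) (hq : (0 < q)%N) (hr : (0 < r)%N)
  (hrL : (r <= L - 2)%N) :
  mu_plus q (subgrids L r) <= 2 + 2 / r%:R.
Proof.
case: L hrL => [|L'] hrL; first by move: hr hrL; lia.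
have HL : (r.+2 <= L'.+1)%N by move: hr hrL; lia.
have B0 : 0 <= 2 + 2 / r%:R :> rat by rewrite addr_ge0 // divr_ge0.
rewrite /mu_plus; apply: bigmax_le => // S /imset2P[a b _ _ ->].
apply: bigmax_le => // X _; apply: bigmax_le => // f _.
rewrite /mu_plus_XSf; apply: bigmax_le => // c /eqP Hf.
have Hs := card_subgrid a b (ltnW (ltnW HL)).
move: (nat_of_ord f) (ltn_ord f) Hf => {}f Hfl Hf; rewrite Hs in Hfl.
have Hn := mu_bound a b X c HL hr.
rewrite Hf Hs in Hn *.
set m := mu X _ c in Hn *.
have n0 : (0 < r * r - f)%N by lia.
have r0 : 0 < r%:R :> rat by rewrite ltr0n.
rewrite ler_pdivrMr ?ltr0n //.
rewrite -(ler_pM2l r0).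
have -> : r%:R * ((2 + 2 / r%:R) * (r * r - f)%:R) = (2 * r.+1 * (r * r - f))%:R :> rat.
  rewrite !natrM -addn1 natrD; field; by rewrite gt_eqF.
by rewrite -natrM ler_nat.
Qed.
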